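(* Let $T$ be a tree such that every vertex of $A_T$ has degree at most $3$ in $T$. Then $|D_T|\le 2|A_T|+1$, with equality only if $T[A_T\cup D_T]$ is connected, every vertex of $A_T$ has degree $3$, $A_T$ is independent and $C_T=\emptyset$; moreover $\nu(T)\geq \frac{n(T)-1}{3}$.
   Context: $\nu(T)$ is the matching number and $n(T)$ the number of vertices. Gallai–Edmonds sets: $D_T$ is the set of vertices not covered by at least one maximum matching of $T$, $A_T=N_T(D_T)\setminus D_T$, and $C_T=V(T)\setminus(A_T\cup D_T)$. *)

(* Defs.v *)
From mathcomp Require Import all_boot.
Set Implicit Arguments. Unset Strict Implicit. Unset Printing Implicit Defensive.

Section Graphs.
Variable T : finType.
Variable e : rel T.

Definition simple_graph := symmetric e /\ irreflexive e.

Definition has_cycle : Prop :=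
  exists (x : T) (p : seq T),
    [/\ uniq (x :: p), 2 <= size p, path e x p & e (last x p) x].

Definition connected_graph : Prop := forall x y : T, connect e x y.

Definition is_tree : Prop :=
  [/\ simple_graph, 0 < #|T|, connected_graph & ~ has_cycle].

Definition deg (x : T) : nat := #|[set y | e x y]|.

Definition is_edge (B : {set T}) : bool :=
  [exists x, exists y, e x y && (B == [set x; y])].

Definition is_matching (M : {set {set T}}) : bool :=
  [forall B in M, is_edge B] && trivIset M.

Definition nu : nat := \max_(M : {set {set T}} | is_matching M) #|M|.

Definition is_max_matching (M : {set {set T}}) : bool :=
  is_matching M && (#|M| == nu).

Definition GE_D : {set T} :=
  [set x | [exists M, is_max_matching M && (x \notin cover M)]].
Definition GE_A : {set T} :=
  [set x | (x \notin GE_D) && [exists y in GE_D, e y x]].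
Definition GE_C : {set T} := ~: (GE_A :|: GE_D).

Definition induced_connected (S : {set T}) : Prop :=
  forall x y, x \in S -> y \in S ->
    connect [rel u v | [&& e u v, u \in S & v \in S]] x y.

Definition independent (S : {set T}) : Prop :=
  forall x y, x \in S -> y \in S -> ~~ e x y.

End Graphs.

(* Main.v *)
Require Import Defs.
From mathcomp Require Import all_boot.
From mathcomp Require Import zify.
Set Implicit Arguments. Unset Strict Implicit. Unset Printing Implicit Defensive.

Section Match.
Variable T : finType.
Variable e : rel T.
Hypothesis esym : symmetric e.
Hypothesis eirr : irreflexive e.

Lemma is_edgeP B : is_edge e B -> exists x y, e x y /\ B = [set x; y].
Proof. by case/existsP=> x /existsP[y /andP[exy /eqP->]]; exists x, y. Qed.

Lemma is_edgeI x y : e x y -> is_edge e [set x; y].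
Proof. by move=> exy; apply/existsP; exists x; apply/existsP; exists y; rewrite exy eqxx. Qed.

Lemma matchingP (M : {set {set T}}) : is_matching e M ->
  (forall B, B \in M -> is_edge e B) /\
  (forall B1 B2 x, B1 \in M -> B2 \in M -> x \in B1 -> x \in B2 -> B1 = B2).
Proof.
case/andP=> /forall_inP he /trivIsetP tr; split=> // B1 B2 x h1 h2 x1 x2.
apply/eqP; apply: contraT=> ne; have := tr _ _ h1 h2 ne.
by move/disjoint_setI0/setP/(_ x); rewrite inE x1 x2 inE.
Qed.

Lemma matchingI (M : {set {set T}}) :
  (forall B, B \in M -> is_edge e B) ->
  (forall B1 B2 x, B1 \in M -> B2 \in M -> x \in B1 -> x \in B2 -> B1 = B2) ->
  is_matching e M.
Proof.
move=> he tr; apply/andP; split; first by apply/forall_inP.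
apply/trivIsetP=> B1 B2 h1 h2 ne; rewrite -setI_eq0; apply/eqP/setP=> x.
rewrite !inE; apply/negP=> /andP[x1 x2]; by rewrite (tr _ _ _ h1 h2 x1 x2) eqxx in ne.
Qed.

Lemma edge_two x y : e x y -> #|[set x; y]| = 2.
Proof. by move=> exy; rewrite cards2; case: eqP=> // E; rewrite E eirr in exy. Qed.

Lemma coverP (M : {set {set T}}) x : reflect (exists2 B, B \in M & x \in B) (x \in cover M).
Proof. exact: bigcupP. Qed.

Lemma cover_mate (M : {set {set T}}) x : is_matching e M -> x \in cover M ->
  exists y, e x y /\ [set x; y] \in M.
Proof.
move=> /matchingP[he _] /coverP[B BM xB].
case: (is_edgeP (he _ BM))=> u [w [euw EB]]; subst B.
move: xB; rewrite !inE=> /orP[]/eqP->; first by exists w.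
by exists u; rewrite esym setUC.
Qed.

Lemma mate_cover (M : {set {set T}}) x y : [set x; y] \in M -> x \in cover M /\ y \in cover M.
Proof. by move=> h; split; apply/coverP; exists [set x; y]; rewrite // !inE eqxx ?orbT. Qed.

Lemma matching_sub (M M' : {set {set T}}) : M' \subset M -> is_matching e M -> is_matching e M'.
Proof.
move=> /subsetP sub /matchingP[he tr]; apply: matchingI.
  by move=> B /sub; apply: he.
by move=> B1 B2 x /sub h1 /sub h2; apply: tr.
Qed.

Lemma matching_add (M : {set {set T}}) x y : is_matching e M -> e x y ->
  x \notin cover M -> y \notin cover M ->
  is_matching e ([set x; y] |: M) /\ #|[set x; y] |: M| = #|M|.+1.
Proof.
move=> mM exy xM yM; have [he tr] := matchingP mM.
have nin : [set x; y] \notin M.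
  by apply: contra xM=> h; case: (mate_cover h).
split; last by rewrite cardsU1 nin.
apply: matchingI.
  by move=> B; rewrite in_setU1=> /orP[/eqP->|]; [apply: is_edgeI | apply: he].
have key B z : B \in M -> z \in B -> z \in [set x; y] -> False.
  move=> BM zB; rewrite !inE=> /orP[]/eqP E; subst z.
    by move: xM; case/coverP; exists B.
  by move: yM; case/coverP; exists B.
move=> B1 B2 z; rewrite !in_setU1 => /orP[/eqP->|h1] /orP[/eqP->|h2] z1 z2 //.
- by case: (key _ _ h2 z2 z1).
- by case: (key _ _ h1 z1 z2).
- exact: tr h1 h2 z1 z2.
Qed.

Lemma cover_D1 (M : {set {set T}}) B x : is_matching e M -> B \in M ->
  (x \in cover (M :\ B)) = (x \in cover M) && (x \notin B).
Proof.
move=> mM BM; have [he tr] := matchingP mM.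
apply/coverP/andP.
  case=> B'; rewrite inE=> /andP[ne B'M] xB'; split; first by apply/coverP; exists B'.
  by apply/negP=> xB; move: ne; rewrite (tr _ _ _ B'M BM xB' xB) inE eqxx.
case=> /coverP[B' B'M xB'] xB; exists B' => //; rewrite inE B'M andbT.
by apply/negP=> /set1P E; move: xB; rewrite -E xB'.
Qed.

Lemma nu_ge (M : {set {set T}}) : is_matching e M -> #|M| <= nu e.
Proof. by move=> mM; apply: (@leq_bigmax_cond _ (fun M => is_matching e M)). Qed.

Lemma nu_exists : exists M, is_max_matching e M.
Proof.
have m0 : is_matching e set0 by apply: matchingI=> B; rewrite inE.
exists [arg max_(M > set0 | is_matching e M) #|M|].
rewrite /is_max_matching /nu (bigmax_eq_arg _ m0) eqxx andbT.
by case: arg_maxnP.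
Qed.

Lemma swap (M : {set {set T}}) B x y : is_matching e M -> B \in M -> e x y ->
  x \notin cover (M :\ B) -> y \notin cover (M :\ B) ->
  is_matching e ([set x; y] |: (M :\ B)) /\ #|[set x; y] |: (M :\ B)| = #|M|.
Proof.
move=> mM BM exy hx hy.
have mM' : is_matching e (M :\ B) by apply: matching_sub mM; apply: subD1set.
have [-> ->] := matching_add mM' exy hx hy; split=> //.
by rewrite (cardsD1 B M) BM.
Qed.

Lemma swap_max (M : {set {set T}}) B x y : is_max_matching e M -> B \in M -> e x y ->
  x \notin cover (M :\ B) -> y \notin cover (M :\ B) ->
  is_max_matching e ([set x; y] |: (M :\ B)).
Proof.
case/andP=> mM /eqP cM BM exy hx hy; have [m' c'] := swap mM BM exy hx hy.
by rewrite /is_max_matching m' c' cM eqxx.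
Qed.

Lemma max_no_add (M : {set {set T}}) x y : is_max_matching e M -> e x y ->
  x \notin cover M -> y \notin cover M -> False.
Proof.
case/andP=> mM /eqP cM exy hx hy; have [m' c'] := matching_add mM exy hx hy.
by have := nu_ge m'; rewrite c' cM ltnn.
Qed.


Lemma swap_nocover (M : {set {set T}}) B u w z : is_matching e M -> B \in M ->
  z \in B -> z \notin [set u; w] -> z \notin cover ([set u; w] |: (M :\ B)).
Proof.
move=> mM BM zB zuw; apply/coverP=> -[C]; rewrite in_setU1=> /orP[/eqP->|CM] zC.
  by rewrite zC in zuw.
have : z \in cover (M :\ B) by apply/coverP; exists C.
by rewrite cover_D1 // zB andbF.
Qed.

Lemma swap_change (M : {set {set T}}) B (u w : T) C :
  (C \in [set u; w] |: (M :\ B)) != (C \in M) -> C = [set u; w] \/ C = B.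
Proof.
rewrite in_setU1 in_setD1; case: (C =P [set u; w]) => [->|_]; first by left.
by case: (C =P B) => [->|_]; [right | rewrite /= eqxx].
Qed.

Hypothesis acyc : ~ has_cycle e.

Lemma tree_adj x p z : path e x p -> uniq (x :: p) -> z \in p -> e z x ->
  z = head x p.
Proof.
move=> pp up zp ezx; case/splitPr: zp pp up => p1 p2 pp up.
case: p1 pp up => [|h p1] pp up; first by [].
exfalso; apply: acyc; exists x, (rcons (h :: p1) z); split.
- move: up; rewrite -cats1 -!cat_cons !cat_uniq => /and3P[-> hn _] /=.
  by rewrite andbT orbF; move: hn; rewrite /= negb_or => /andP[].
- by rewrite size_rcons.
- move: pp; rewrite rcons_path cat_path => /andP[-> /=] /andP[-> _].
  done.
- by rewrite last_rcons.
Qed.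

Lemma EX n : forall (M N : {set {set T}}) y, #|N :\: M| = n ->
  is_max_matching e M -> is_max_matching e N -> y \in cover M -> y \notin cover N ->
  exists M' b q, [/\ is_max_matching e M', y \notin cover M', [set y; b] \in M,
     path e y (b :: q) && uniq (y :: b :: q) &
     forall B z, (B \in M') != (B \in M) -> z \in B -> z \in y :: b :: q].
Proof.
elim/ltn_ind: n => n IH M N y hn mM mN yM yN.
have mMm : is_matching e M by case/andP: mM.
have mNm : is_matching e N by case/andP: mN.
have [b [eyb ybM]] := cover_mate mMm yM.
have bN : b \in cover N by apply: contraT => bN; case: (max_no_add mN eyb yN bN).
have [c [ebc bcN]] := cover_mate mNm bN.
have cy : c != y by apply: contraNneq yN => <-; case: (mate_cover bcN).
have bnc : b != c by apply: contraTneq ebc => ->; rewrite eirr.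
have ynb : y != b by apply: contraTneq eyb => ->; rewrite eirr.
have cyb : c \notin [set y; b] by rewrite !inE negb_or cy eq_sym bnc.
have ybc : y \notin [set b; c] by rewrite !inE negb_or ynb eq_sym cy.
case: (boolP (c \in cover M)) => cM; last first.
  exists ([set b; c] |: (M :\ [set y; b])), b, [:: c]; split=> //.
  - apply: (swap_max mM ybM ebc); rewrite (cover_D1 _ mMm ybM).
      by rewrite !inE eqxx orbT andbF.
    by rewrite (negbTE cM).
  - by apply: (swap_nocover mMm ybM _ ybc); rewrite !inE eqxx.
  - apply/andP; split; first by rewrite /= eyb ebc.
    by rewrite /= !inE negb_or ynb eq_sym cy /= bnc.
  move=> B z /swap_change [] -> ; rewrite !inE => /orP[]->; rewrite ?orbT //.
have [d [ecd cdM]] := cover_mate mMm cM.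
set N1 := [set y; b] |: (N :\ [set b; c]).
have mN1 : is_max_matching e N1.
  apply: (swap_max mN bcN eyb); rewrite (cover_D1 _ mNm bcN).
    by rewrite (negbTE yN).
  by rewrite !inE eqxx andbF.
have cN1 : c \notin cover N1.
  by apply: (swap_nocover mNm bcN _ cyb); rewrite !inE eqxx orbT.
have bcM : [set b; c] \notin M.
  apply/negP=> bcM; have := (matchingP mMm).2 _ _ b bcM ybM.
  move=> h; have E : [set b; c] = [set y; b] by apply: h; rewrite !inE eqxx ?orbT.
  by move: cyb; rewrite -E !inE eqxx orbT.
have lt : #|N1 :\: M| < n.
  rewrite -hn; apply: (@leq_ltn_trans #|(N :\: M) :\ [set b; c]|).
    apply: subset_leq_card; apply/subsetP=> B; rewrite !inE.
    case/andP=> BM /orP[/eqP E|/andP[-> ->]]; last by rewrite BM.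
    by rewrite E ybM in BM.
  by rewrite (cardsD1 [set b; c] (N :\: M)) !inE bcM bcN.
have [M1 [d' [q1 [mM1 cM1 cd'M /andP[pq1 uq1] ch1]]]] := IH _ lt M N1 c erefl mM mN1 cM cN1.
have d'b : d' != b.
  apply/eqP=> E; subst d'; have := (matchingP mMm).2 _ _ b cd'M ybM.
  move=> h; have E : [set c; b] = [set y; b] by apply: h; rewrite !inE eqxx ?orbT.
  by move: cyb; rewrite -E !inE eqxx.
have bnin : b \notin c :: d' :: q1.
  rewrite in_cons negb_or bnc /=; apply/negP=> bin.
  have := tree_adj pq1 uq1 bin; move=> /(_ ebc) /= E.
  by rewrite E eqxx in d'b.
have ynin : y \notin c :: d' :: q1.
  apply/negP=> yin.
  have pb : path e b (c :: d' :: q1) by rewrite /= ebc; exact: pq1.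
  have ub : uniq (b :: c :: d' :: q1) by rewrite cons_uniq bnin uq1.
  have := tree_adj pb ub yin; move=> /(_ eyb) /= E.
  by rewrite E eqxx in cy.
have ybM1 : [set y; b] \in M1.
  apply: contraT=> h; have := ch1 [set y; b] y; rewrite ybM (negbTE h).
  have yyb : y \in [set y; b] by rewrite !inE eqxx.
  move=> /(_ isT yyb) yin.
  by rewrite yin in ynin.
have mM1m : is_matching e M1 by case/andP: mM1.
exists ([set b; c] |: (M1 :\ [set y; b])), b, (c :: d' :: q1); split=> //.
- apply: (swap_max mM1 ybM1 ebc); rewrite (cover_D1 _ mM1m ybM1).
    by rewrite !inE eqxx orbT andbF.
  by rewrite (negbTE cM1).
- by apply: (swap_nocover mM1m ybM1 _ ybc); rewrite !inE eqxx.
- apply/andP; split; first by rewrite /= eyb ebc; exact: pq1.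
  by rewrite cons_uniq in_cons negb_or ynb ynin cons_uniq bnin uq1.
move=> B z hB zB.
case: (boolP (B == [set b; c])) => [E|Bbc].
  by move/eqP: E zB => -> ; rewrite !inE => /orP[]->; rewrite ?orbT.
case: (B =P [set y; b]) => [E|Byb].
  by move: zB; rewrite E !inE => /orP[]->; rewrite ?orbT.
have {}hB : (B \in M1) != (B \in M).
  by move: hB; rewrite in_setU1 in_setD1 (negbTE Bbc) /=; move/eqP/negbTE: Byb => ->.
by rewrite 2!in_cons (ch1 _ _ hB zB) !orbT.
Qed.

End Match.

Section GE.
Variable T : finType.
Variable e : rel T.
Hypothesis esym : symmetric e.
Hypothesis eirr : irreflexive e.
Hypothesis acyc : ~ has_cycle e.

Lemma inD x : reflect (exists M, is_max_matching e M /\ x \notin cover M) (x \in GE_D e).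
Proof.
rewrite inE; apply: (iffP existsP) => [[M /andP[h1 h2]]|[M [h1 h2]]]; exists M => //.
by rewrite h1 h2.
Qed.

Lemma mate_neq (M : {set {set T}}) x y : is_matching e M -> [set x; y] \in M -> x != y.
Proof.
move=> /matchingP[he _] /he /is_edgeP[u [w [euw E]]].
have := edge_two eirr euw; rewrite -E cards2; by case: (x != y).
Qed.

Lemma D_indep x y : x \in GE_D e -> y \in GE_D e -> e x y -> False.
Proof.
move=> /inD[M1 [mM1 xM1]] /inD[M2 [mM2 yM2]] exy.
case: (boolP (y \in cover M1)) => yM1; last exact: max_no_add mM1 exy xM1 yM1.
have [M' [b [q [mM' yM' ybM1 /andP[pq uq] ch]]]] :=
  EX esym eirr acyc erefl mM1 mM2 yM1 yM2.
have xM' : x \notin cover M'.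
  apply/coverP => -[B BM' xB].
  have BM1 : B \notin M1 by apply: contra xM1 => BM1; apply/coverP; exists B.
  have := ch B x; rewrite BM' (negbTE BM1) => /(_ isT xB).
  rewrite in_cons => /orP[/eqP E|xin].
    by move: exy; rewrite E eirr.
  have := tree_adj acyc pq uq xin exy => /= E; subst b.
  by case: (mate_cover ybM1) => _ h; rewrite h in xM1.
exact: max_no_add mM' exy xM' yM'.
Qed.

Lemma A_notD a : a \in GE_A e -> a \notin GE_D e.
Proof. by rewrite inE => /andP[]. Qed.

Lemma A_cover M a : is_max_matching e M -> a \in GE_A e -> a \in cover M.
Proof.
move=> mM /A_notD aD; apply: contraT => aM; case/negP: aD.
by apply/inD; exists M.
Qed.

Lemma A_mate M a z : is_max_matching e M -> a \in GE_A e -> [set a; z] \in M ->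
  z \in GE_D e.
Proof.
move=> mM aA azM; have := aA; rewrite inE => /andP[_ /existsP[y /andP[yD eya]]].
have eay : e a y by rewrite esym.
have base M' : is_max_matching e M' -> [set a; z] \in M' -> y \notin cover M' ->
    z \in GE_D e.
  move=> mM' azM' yM'; have mM'm : is_matching e M' by case/andP: mM'.
  apply/inD; exists ([set a; y] |: (M' :\ [set a; z])); split.
    apply: (swap_max mM' azM' eay); rewrite (cover_D1 _ mM'm azM').
      by rewrite !inE eqxx andbF.
    by rewrite (negbTE yM').
  apply: (swap_nocover mM'm azM'); first by rewrite !inE eqxx orbT.
  rewrite !inE negb_or eq_sym (mate_neq mM'm azM') /=.
  by apply: contraNneq yM' => <-; case: (mate_cover azM').
case: (boolP (y \in cover M)) => yM; last exact: base M mM azM yM.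
have [N [mN yN]] := inD _ yD.
have [M' [b [q [mM' yM' ybM /andP[pq uq] ch]]]] :=
  EX esym eirr acyc erefl mM mN yM yN.
case: (z =P y) => [->//|zy].
have mMm : is_matching e M by case/andP: mM.
apply: (base M' mM') => //; apply: contraT => h.
have := ch [set a; z] a; rewrite azM (negbTE h) => /(_ isT).
rewrite !inE eqxx /= => /(_ isT) /orP[/eqP E|ain].
  by move: eya; rewrite E eirr.
have := tree_adj acyc pq uq ain eay => /= E; subst b.
have E := (matchingP mMm).2 _ _ a ybM azM.
have : z \in [set y; a] by rewrite E ?inE ?eqxx ?orbT.
rewrite !inE => /orP[/eqP //|/eqP za].
by move: (mate_neq mMm azM); rewrite za eqxx.
Qed.

End GE.

Section Count.
Variable T : finType.
Variable e : rel T.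
Hypothesis esym : symmetric e.
Hypothesis eirr : irreflexive e.
Hypothesis acyc : ~ has_cycle e.

Lemma cover_card (M : {set {set T}}) : is_matching e M -> #|cover M| = 2 * #|M|.
Proof.
move=> mM; have [he _] := matchingP mM.
move: mM => /andP[_ /eqP <-]; rewrite mulnC -sum_nat_const.
apply: eq_bigr => B /he /is_edgeP[x [y [exy ->]]]. exact: (@edge_two _ e eirr x y exy).
Qed.

Lemma AD_count (M : {set {set T}}) : is_max_matching e M ->
  #|~: cover M| + #|GE_A e| <= #|GE_D e| /\ #|GE_A e| <= #|M|.
Proof.
move=> mM; have mMm : is_matching e M by case/andP: mM.
pose f a := odflt a [pick z | [set a; z] \in M].
have fM a : a \in GE_A e -> [set a; f a] \in M.
  move=> aA; have [y [_ ayM]] := cover_mate esym mMm (A_cover mM aA).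
  rewrite /f; case: pickP => [z //|/(_ y)]; by rewrite ayM.
have fD a : a \in GE_A e -> f a \in GE_D e by move=> aA; exact: (@A_mate _ e esym eirr acyc M a (f a) mM aA (fM a aA)).
have finj : {in GE_A e &, injective f}.
  move=> a a' aA a'A E.
  have E2 : [set a; f a] = [set a'; f a'].
    by apply: ((matchingP mMm).2 _ _ (f a) (fM a aA) (fM a' a'A)); rewrite !inE ?E eqxx ?orbT.
  have : a \in [set a'; f a'] by rewrite -E2 !inE eqxx.
  rewrite !inE => /orP[/eqP //|/eqP aE].
  by have := A_notD aA; rewrite aE fD.
have ginj : {in GE_A e &, injective (fun a => [set a; f a])}.
  move=> a a' aA a'A E.
  have : a \in [set a'; f a'] by rewrite -E !inE eqxx.
  rewrite !inE => /orP[/eqP //|/eqP aE].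
  by have := A_notD aA; rewrite aE fD.
split; last first.
  rewrite -(card_in_imset ginj); apply: subset_leq_card.
  by apply/subsetP=> B /imsetP[a aA ->]; exact: fM.
rewrite -(card_in_imset finj) addnC -cardsUI.
have -> : [set f x | x in GE_A e] :&: ~: cover M = set0.
  apply/setP=> z; rewrite !inE; apply/negP=> /andP[/imsetP[a aA ->]].
  by case: (mate_cover (fM a aA)) => _ ->.
rewrite cards0 addn0; apply: subset_leq_card; apply/subsetP=> z.
rewrite inE => /orP[/imsetP[a aA ->]|]; first exact: fD.
by rewrite inE => zM; apply/inD; exists M.
Qed.

End Count.

Section Root.
Variable T : finType.
Variable e : rel T.
Hypothesis esym : symmetric e.
Hypothesis eirr : irreflexive e.
Hypothesis acyc : ~ has_cycle e.
Hypothesis conn : connected_graph e.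
Variable r : T.

Definition reach v n := [exists t : n.-tuple T, path e r t && (last r t == v)].

Lemma hex v : exists n, reach v n.
Proof.
have /connectP[p pp vE] := conn r v.
exists (size p); apply/existsP; exists (in_tuple p); by rewrite /= pp vE eqxx.
Qed.

Definition h v := ex_minn (hex v).

Lemma h_step v : v != r -> exists u, e v u && (h u < h v).
Proof.
move=> vr; rewrite /h; case: ex_minnP => n /existsP[t /andP[pt /eqP lt]] hmin.
case: t pt lt => s /= /eqP sz; case/lastP: s sz => [|s x] sz /=.
  by move=> _ E; rewrite E eqxx in vr.
rewrite rcons_path last_rcons => /andP[ps ex] xv; subst x.
exists (last r s); rewrite esym ex /=.
case: ex_minnP => m _ /(_ (size s)) hm.
apply: leq_ltn_trans (hm _) _.
  by apply/existsP; exists (in_tuple s); rewrite /= ps eqxx.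
by rewrite -sz size_rcons.
Qed.


Definition par v := odflt v [pick u | e v u && (h u < h v)].

Lemma par_spec v : v != r -> e v (par v) && (h (par v) < h v).
Proof.
move=> /h_step[u hu]; rewrite /par; case: pickP => [u' //|/(_ u)]; by rewrite hu.
Qed.

Hypothesis hdeg : forall x, x \in GE_A e -> deg e x <= 3.
Hypothesis rD : r \in GE_D e.

Local Notation D := (GE_D e).
Local Notation A := (GE_A e).

Lemma rA a : a \in A -> a != r.
Proof. by move=> /A_notD aD; apply: contraNneq aD => ->. Qed.

Lemma par_A v : v \in D :\ r -> par v \in A.
Proof.
rewrite in_setD1 => /andP[vr vD]; have /andP[evp _] := par_spec vr.
rewrite inE; apply/andP; split.
  by apply/negP => pD; exact: (@D_indep _ e esym eirr acyc _ _ vD pD evp).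
by apply/existsP; exists v; rewrite vD evp.
Qed.

Definition ch a := [set v in D :\ r | par v == a].

Lemma ch_sub a : a \in A -> ch a \subset [set w | e a w] :\ par a.
Proof.
move=> aA; apply/subsetP => v; rewrite inE => /andP[vX /eqP pa].
have vr : v != r by move: vX; rewrite in_setD1 => /andP[].
have /andP[evp hv] := par_spec vr; rewrite pa in evp hv.
have /andP[eap ha] := par_spec (rA aA).
rewrite !inE (esym a v) evp andbT; apply/eqP => E; rewrite E in hv.
by have := ltn_trans hv ha; rewrite ltnn.
Qed.

Lemma deg_par a : a \in A -> #|[set w | e a w] :\ par a| = (deg e a).-1.
Proof.
move=> aA; have /andP[eap _] := par_spec (rA aA).
rewrite /deg (cardsD1 (par a) [set w | e a w]) inE eap.
by [].
Qed.

Lemma ch_le a : a \in A -> #|ch a| <= 2.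
Proof.
move=> aA; apply: leq_trans (subset_leq_card (ch_sub aA)) _.
by rewrite deg_par //; have := hdeg aA; case: (deg e a) => //= n; rewrite ltnS.
Qed.

Lemma sumX : #|D :\ r| = \sum_(a in A) #|ch a|.
Proof.
rewrite -sum1_card (partition_big par (mem A)) /=; last exact: par_A.
apply: eq_bigr => a _; rewrite -sum1_card; apply: eq_bigl => v.
by rewrite !inE.
Qed.

Lemma D_bound : #|D| <= 2 * #|A| + 1.
Proof.
rewrite (cardsD1 r D) rD sumX addnC leq_add2r mulnC -sum_nat_const.
by apply: leq_sum => a aA; exact: ch_le.
Qed.

Hypothesis heq : #|D| = 2 * #|A| + 1.

Lemma ch2 a : a \in A -> #|ch a| = 2.
Proof.
have hs : \sum_(a in A) #|ch a| = \sum_(a in A) 2.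
  rewrite sum_nat_const -sumX; move: heq; rewrite (cardsD1 r D) rD; lia.
have : \sum_(a in A) (2 - #|ch a|) == 0 by rewrite sumnB ?hs ?subnn // => i; exact: ch_le.
rewrite sum_nat_eq0 => /forall_inP H aA; have := H a aA; have := ch_le aA; lia.
Qed.

Lemma deg3 a : a \in A -> deg e a = 3.
Proof.
move=> aA; have := subset_leq_card (ch_sub aA); rewrite ch2 // deg_par //.
have := hdeg aA; lia.
Qed.

Lemma nbrD a w : a \in A -> e a w -> w != par a -> w \in D.
Proof.
move=> aA eaw wp.
have E : #|ch a| = #|[set w | e a w] :\ par a| by rewrite ch2 // deg_par // deg3.
have := (subset_cardP E (ch_sub aA)) w; rewrite !inE eaw wp /= => /andP[/andP[_ ->]].
done.
Qed.

Lemma A_indep : independent e A.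
Proof.
move=> a a' aA a'A; apply/negP => eaa'.
have pa : a' = par a by apply/eqP; apply: contraT => h; have := nbrD aA eaa' h; rewrite (negbTE (A_notD a'A)).
have ea'a : e a' a by rewrite esym.
have pa' : a = par a' by apply/eqP; apply: contraT => h; have := nbrD a'A ea'a h; rewrite (negbTE (A_notD aA)).
have /andP[_ h1] := par_spec (rA aA).
have /andP[_ h2] := par_spec (rA a'A).
rewrite -pa in h1; rewrite -pa' in h2.
by have := ltn_trans h1 h2; rewrite ltnn.
Qed.

Lemma all_AD v : v \in A :|: D.
Proof.
suff key k : forall v, h v <= k -> v \in A :|: D by exact: key _ v (leqnn _).
elim: k => [|k IH] {}v hv; (case: (v =P r) => [->|/eqP vr]; first by rewrite inE rD orbT);
  have /andP[evp hp] := par_spec vr.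
  by move: hv; rewrite leqn0 => /eqP E; rewrite E in hp.
have /IH : h (par v) <= k by rewrite -ltnS (leq_trans hp hv).
rewrite inE => /orP[pA|pD].
  have epv : e (par v) v by rewrite esym.
  rewrite inE (nbrD pA epv) ?orbT //.
  have /andP[_ hpp] := par_spec (rA pA).
  by apply/eqP => E; rewrite -E in hpp; have := ltn_trans hp hpp; rewrite ltnn.
rewrite inE; case: (boolP (v \in D)) => vD; rewrite ?orbT // orbF.
by rewrite inE vD /=; apply/existsP; exists (par v); rewrite pD esym evp.
Qed.

End Root.
Unset Implicit Arguments.


Theorem mainTheorem3 (T : finType) (e : rel T) :
  is_tree e ->
  (forall x, x \in GE_A e -> deg e x <= 3) ->
  [/\ #|GE_D e| <= 2 * #|GE_A e| + 1,
      (#|GE_D e| = 2 * #|GE_A e| + 1 ->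
         [/\ induced_connected e (GE_A e :|: GE_D e),
             (forall x, x \in GE_A e -> deg e x = 3),
             independent e (GE_A e)
           & GE_C e = set0])
    & #|T| - 1 <= 3 * nu e].
Proof.
move=> [[esym eirr] Tpos conn acyc] hdeg.
have [M mM] := nu_exists e.
have [hU hA] := AD_count esym eirr acyc mM.
have /andP[mMm /eqP cM] := mM.
have hcov := cover_card eirr mMm.
have hn := cardsC (cover M).
case: (set_0Vmem (GE_D e)) => [D0 | [r rD]].
  rewrite D0 cards0 in hU *; split => //; first by lia.
  by move: hU hA hcov hn cM; lia.
have hb := D_bound esym eirr acyc conn hdeg rD.
split => //; last by move: hU hA hcov hn cM hb; lia.
move=> heq; split.
- move=> x y _ _.
  have E : [rel u v | [&& e u v, u \in GE_A e :|: GE_D e & v \in GE_A e :|: GE_D e]] =2 e.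
    move=> u w /=; have hAD := all_AD esym eirr acyc conn hdeg rD heq; by rewrite (hAD u) (hAD w) /= andbT.
  by rewrite (eq_connect E); apply: conn.
- move=> a aA; exact: (deg3 esym eirr acyc conn hdeg rD heq aA).
- exact: (A_indep esym eirr acyc conn hdeg rD heq).
- apply/setP => x; rewrite /GE_C inE (all_AD esym eirr acyc conn hdeg rD heq).
  by rewrite inE.
Qed.
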